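(* Let $N_1,N_2\ge1$, let $C_k=\{(\xi_j)_{1\le j\le N_k}\in[0,1]^{N_k}:\sum_j\xi_j=1\}$ for $k=1,2$, and let $L$ be a nonzero real $N_1\times N_2$ matrix such that there exist $z_1\in C_1$, $z_2\in C_2$ with $-Lz_2\in N_{C_1}z_1$ and $L^\top z_1\in N_{C_2}z_2$. Let $\varepsilon\in]0,1/(\|L\|+1)[$ and let $(\gamma_n)_{n\in\mathbb N}$ be a sequence in $[\varepsilon,(1-\varepsilon)/\|L\|]$. Let $x_{1,0}\in\mathbb R^{N_1}$, $x_{2,0}\in\mathbb R^{N_2}$, and for every $n$ set $y_{1,n}=x_{1,n}-\gamma_nLx_{2,n}$, $y_{2,n}=x_{2,n}+\gamma_nL^\top x_{1,n}$, $p_{1,n}=P_{C_1}y_{1,n}$, $p_{2,n}=P_{C_2}y_{2,n}$, $q_{1,n}=p_{1,n}-\gamma_nLp_{2,n}$, $q_{2,n}=p_{2,n}+\gamma_nL^\top p_{1,n}$, $x_{1,n+1}=x_{1,n}-y_{1,n}+q_{1,n}$, $x_{2,n+1}=x_{2,n}-y_{2,n}+q_{2,n}$. Then $x_{1,n}\to\overline x_1$ and $x_{2,n}\to\overline x_2$, where $\overline x_1\in\operatorname{Argmin}_{x\in C_1}x^\top L\overline x_2$ and $\overline x_2\in\operatorname{Argmax}_{x\in C_2}\overline x_1^\top Lx$.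
   Context: $\|L\|$ is the operator norm of $L$ (Euclidean norms). For a nonempty closed convex set $C$, $P_C$ is the Euclidean projection onto $C$ and $N_Cx=\{u:\langle y-x,u\rangle\le0\ \forall y\in C\}$ for $x\in C$ (empty otherwise) is the normal cone. *)

(* Defs.v *)
(* real vectors in R^N are functions nat -> R, only indices < N matter;
   an N1 x N2 matrix is L : nat -> nat -> R (entries L i j with i < N1, j < N2). *)
From Stdlib Require Import Reals Lra.
Open Scope R_scope.

Fixpoint vsum (N : nat) (f : nat -> R) : R :=
  match N with O => 0 | S k => vsum k f + f k end.

Definition dot (N : nat) (x y : nat -> R) : R := vsum N (fun i => x i * y i).
Definition vnorm (N : nat) (x : nat -> R) : R := sqrt (dot N x x).

Definition Mv (N2 : nat) (L : nat -> nat -> R) (x : nat -> R) : nat -> R :=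
  fun i => vsum N2 (fun j => L i j * x j).
Definition Mtv (N1 : nat) (L : nat -> nat -> R) (x : nat -> R) : nat -> R :=
  fun j => vsum N1 (fun i => L i j * x i).

Definition simplex (N : nat) (x : nat -> R) : Prop :=
  (forall i, (i < N)%nat -> 0 <= x i <= 1) /\ vsum N x = 1.

Definition in_normal_cone (N : nat) (C : (nat -> R) -> Prop) (x u : nat -> R) : Prop :=
  C x /\ forall y, C y -> dot N (fun i => y i - x i) u <= 0.

(* p = P_C y (Euclidean projection; unique on the indices < N) *)
Definition is_proj (N : nat) (C : (nat -> R) -> Prop) (y p : nat -> R) : Prop :=
  C p /\ forall z, C z -> vnorm N (fun i => y i - p i) <= vnorm N (fun i => y i - z i).

Definition is_opnorm (N1 N2 : nat) (L : nat -> nat -> R) (m : R) : Prop :=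
  is_lub (fun r => exists x, vnorm N2 x <= 1 /\ r = vnorm N1 (Mv N2 L x)) m.

(* Main.v *)
Require Import Defs.
From Stdlib Require Import Reals Lra Lia Psatz ClassicalEpsilon.
Open Scope R_scope.

Lemma vsum_ext N f g : (forall i, (i < N)%nat -> f i = g i) -> vsum N f = vsum N g.
Proof. induction N; simpl; intros H; [reflexivity|]. rewrite IHN by (intros; apply H; lia). rewrite H by lia. reflexivity. Qed.

Lemma vsum_lin6 N f g1 g2 g3 g4 g5 g6 a1 a2 a3 a4 a5 a6 :
  (forall i, (i < N)%nat -> f i = a1 * g1 i + a2 * g2 i + a3 * g3 i + a4 * g4 i + a5 * g5 i + a6 * g6 i) ->
  vsum N f = a1 * vsum N g1 + a2 * vsum N g2 + a3 * vsum N g3 + a4 * vsum N g4 + a5 * vsum N g5 + a6 * vsum N g6.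
Proof. induction N; simpl; intros H; [ring|]. rewrite IHN by (intros; apply H; lia). rewrite H by lia. ring. Qed.

Lemma vsum_lin2 N f g1 g2 a1 a2 :
  (forall i, (i < N)%nat -> f i = a1 * g1 i + a2 * g2 i) ->
  vsum N f = a1 * vsum N g1 + a2 * vsum N g2.
Proof. induction N; simpl; intros H; [ring|]. rewrite IHN by (intros; apply H; lia). rewrite H by lia. ring. Qed.

Lemma vsum_nonneg N f : (forall i, (i < N)%nat -> 0 <= f i) -> 0 <= vsum N f.
Proof. induction N; simpl; intros H; [lra|]. specialize (IHN (fun i Hi => H i ltac:(lia))). specialize (H N ltac:(lia)). lra. Qed.

Lemma vsum_ge_term N f k : (forall i, (i < N)%nat -> 0 <= f i) -> (k < N)%nat -> f k <= vsum N f.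
Proof. induction N; simpl; intros H Hk; [lia|].
  assert (0 <= vsum N f) by (apply vsum_nonneg; intros; apply H; lia).
  destruct (Nat.eq_dec k N) as [->|].
  - lra.
  - specialize (IHN (fun i Hi => H i ltac:(lia)) ltac:(lia)). specialize (H N ltac:(lia)). lra. Qed.

Lemma vsum_swap N1 N2 (f : nat -> nat -> R) :
  vsum N1 (fun i => vsum N2 (fun j => f i j)) = vsum N2 (fun j => vsum N1 (fun i => f i j)).
Proof. induction N1; simpl.
  - induction N2; simpl; [reflexivity| rewrite <- IHN2; ring].
  - rewrite IHN1. symmetry. rewrite (vsum_lin2 N2 (fun j => vsum N1 (fun i => f i j) + f N1 j) (fun j => vsum N1 (fun i => f i j)) (fun j => f N1 j) 1 1) by (intros; ring). ring. Qed.

Lemma dot_nonneg N u : 0 <= dot N u u.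
Proof. apply vsum_nonneg; intros; nra. Qed.

Lemma dot_comm N u v : dot N u v = dot N v u.
Proof. apply vsum_ext; intros; ring. Qed.

Lemma skew N1 N2 L a b : dot N1 (Mv N2 L a) b = dot N2 a (Mtv N1 L b).
Proof. unfold dot, Mv, Mtv.
  transitivity (vsum N1 (fun i => vsum N2 (fun j => L i j * a j * b i))).
  - apply vsum_ext; intros. rewrite (vsum_lin2 N2 (fun j => L i j * a j * b i) (fun j => L i j * a j) (fun _ => 0) (b i) 0) by (intros; ring). ring.
  - rewrite vsum_swap. apply vsum_ext; intros. rewrite (vsum_lin2 N1 (fun k => L k i * a i * b k) (fun k => L k i * b k) (fun _ => 0) (a i) 0) by (intros; ring). ring. Qed.

Lemma Mv_lin N2 L u v a b i : Mv N2 L (fun j => a * u j + b * v j) i = a * Mv N2 L u i + b * Mv N2 L v i.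
Proof. unfold Mv. apply vsum_lin2; intros; ring. Qed.
Lemma Mtv_lin N1 L u v a b i : Mtv N1 L (fun j => a * u j + b * v j) i = a * Mtv N1 L u i + b * Mtv N1 L v i.
Proof. unfold Mtv. apply vsum_lin2; intros; ring. Qed.

Lemma CS N u v : (dot N u v)^2 <= dot N u u * dot N v v.
Proof.
  set (A := dot N u u). set (B := dot N u v). set (C := dot N v v).
  assert (Hq : forall t, 0 <= A - 2 * t * B + t^2 * C).
  { intro t. assert (E : dot N (fun i => u i - t * v i) (fun i => u i - t * v i) = 1 * A + (-2*t) * B + (t^2) * C + 0 * vsum N (fun _ => 0) + 0 * vsum N (fun _ => 0) + 0 * vsum N (fun _ => 0)).
    { unfold A, B, C, dot. apply vsum_lin6; intros; ring. }
    pose proof (dot_nonneg N (fun i => u i - t * v i)). lra. }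
  assert (HC : 0 <= C) by apply dot_nonneg.
  destruct (Rle_lt_or_eq_dec 0 C HC) as [Cp|C0].
  - specialize (Hq (B / C)). replace (A - 2 * (B / C) * B + (B / C) ^ 2 * C) with ((A * C - B^2) / C) in Hq by (field; lra).
    assert (0 <= A * C - B^2). { apply Rmult_le_reg_r with (/ C). apply Rinv_0_lt_compat; lra. rewrite Rmult_0_l. exact Hq. }
    lra.
  - destruct (Req_dec B 0) as [B0|Bn].
    + rewrite B0. assert (0 <= A) by apply dot_nonneg. nra.
    + specialize (Hq ((A + 1) / (2 * B))). rewrite <- C0 in Hq.
      replace (A - 2 * ((A + 1) / (2 * B)) * B + ((A + 1) / (2 * B)) ^ 2 * 0) with (-1) in Hq by (field; lra). lra.
Qed.

Lemma dot_zero N : dot N (fun _ => 0) (fun _ => 0) = 0.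
Proof. unfold dot. rewrite (vsum_lin2 N _ (fun _ => 0) (fun _ => 0) 0 0) by (intros; ring). ring. Qed.

Lemma opn_nonneg N1 N2 L nL : is_opnorm N1 N2 L nL -> 0 <= nL.
Proof. intros [Hub _].
  apply Rle_trans with (vnorm N1 (Mv N2 L (fun _ => 0))). apply sqrt_pos.
  apply Hub. exists (fun _ => 0). split; [|reflexivity]. unfold vnorm. rewrite dot_zero, sqrt_0. lra. Qed.

Lemma dot_scal N c u : dot N (fun i => c * u i) (fun i => c * u i) = c^2 * dot N u u.
Proof. unfold dot. rewrite (vsum_lin2 N _ (fun i => u i * u i) (fun _ => 0) (c^2) 0) by (intros; ring).
  rewrite (vsum_lin2 N (fun _ => 0) (fun _ => 0) (fun _ => 0) 0 0) by (intros; ring). ring. Qed.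

Lemma opn_bound N1 N2 L nL : is_opnorm N1 N2 L nL -> forall x,
  dot N1 (Mv N2 L x) (Mv N2 L x) <= nL^2 * dot N2 x x.
Proof. intros Hop x. pose proof (opn_nonneg _ _ _ _ Hop) as Hn. destruct Hop as [Hub _].
  apply Rle_plus_epsilon. intros e He.
  set (D := dot N2 x x). set (P := dot N1 (Mv N2 L x) (Mv N2 L x)).
  assert (HD : 0 <= D) by apply dot_nonneg.
  set (dl := e / (nL^2 + 1)).
  assert (Hdl : 0 < dl) by (unfold dl; apply Rdiv_lt_0_compat; nra).
  set (s := sqrt (D + dl)).
  assert (Hs : 0 < s) by (apply sqrt_lt_R0; lra).
  assert (Hss : s * s = D + dl) by (apply sqrt_sqrt; lra).
  set (c := / s).
  assert (Hcs : c * s = 1) by (unfold c; field; lra).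
  assert (HMv : forall i, Mv N2 L (fun j => c * x j) i = c * Mv N2 L x i).
  { intro i. unfold Mv. rewrite (vsum_lin2 N2 _ (fun j => L i j * x j) (fun _ => 0) c 0) by (intros; ring). ring. }
  assert (H1 : vnorm N1 (Mv N2 L (fun j => c * x j)) <= nL).
  { apply Hub. exists (fun j => c * x j). split; [|reflexivity].
    unfold vnorm. rewrite dot_scal. rewrite <- sqrt_1. apply sqrt_le_1_alt.
    fold D. assert (c^2 * (D + dl) = 1) by (rewrite <- Hss; replace (c^2 * (s*s)) with ((c*s)^2) by ring; rewrite Hcs; ring). nra. }
  unfold vnorm in H1.
  replace (dot N1 (Mv N2 L (fun j => c * x j)) (Mv N2 L (fun j => c * x j))) with (c^2 * P) in H1
    by (unfold P; rewrite <- dot_scal; apply vsum_ext; intros; rewrite HMv; reflexivity).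
  assert (HP : 0 <= P) by apply dot_nonneg.
  assert (Hc2 : c^2 * P <= nL^2).
  { pose proof (sqrt_sqrt (c^2 * P) ltac:(nra)). pose proof (sqrt_pos (c^2*P)). nra. }
  assert (P = (s*s) * (c^2 * P)) by (replace ((s*s)*(c^2*P)) with ((c*s)^2 * P) by ring; rewrite Hcs; ring).
  assert (P <= (D + dl) * nL^2) by (rewrite <- Hss; nra).
  assert (nL^2 * dl <= e).
  { unfold dl. apply Rmult_le_reg_r with (nL^2+1). nra. unfold Rdiv. field_simplify; nra. }
  nra.
Qed.

Lemma opnT_bound N1 N2 L nL : is_opnorm N1 N2 L nL -> forall y,
  dot N2 (Mtv N1 L y) (Mtv N1 L y) <= nL^2 * dot N1 y y.
Proof. intros Hop y. set (T := Mtv N1 L y). set (a := dot N2 T T).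
  assert (Ha : a = dot N1 (Mv N2 L T) y) by (unfold a; rewrite skew; reflexivity).
  pose proof (CS N1 (Mv N2 L T) y) as Hcs. rewrite <- Ha in Hcs.
  pose proof (opn_bound _ _ _ _ Hop T) as Hb. fold a in Hb.
  assert (HY : 0 <= dot N1 y y) by apply dot_nonneg.
  assert (Ha0 : 0 <= a) by apply dot_nonneg.
  assert (HLT : 0 <= dot N1 (Mv N2 L T) (Mv N2 L T)) by apply dot_nonneg.
  assert (a^2 <= nL^2 * a * dot N1 y y) by nra.
  destruct (Rle_lt_or_eq_dec 0 a Ha0) as [ap|a0].
  - apply Rmult_le_reg_l with a; [lra|]. nra.
  - rewrite <- a0. pose proof (pow2_ge_0 nL). nra.
Qed.

Lemma simplex_conv N p c t : simplex N p -> simplex N c -> 0 <= t <= 1 ->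
  simplex N (fun i => p i + t * (c i - p i)).
Proof. intros [Hp Sp] [Hc Sc] Ht. split.
  - intros i Hi. specialize (Hp i Hi). specialize (Hc i Hi). nra.
  - rewrite (vsum_lin2 N _ p c (1 - t) t) by (intros; ring). rewrite Sp, Sc. ring. Qed.

Lemma proj_vi N y p c : is_proj N (simplex N) y p -> simplex N c ->
  dot N (fun i => y i - p i) (fun i => c i - p i) <= 0.
Proof. intros [Hp Hmin] Hc.
  set (W := dot N (fun i => y i - p i) (fun i => c i - p i)).
  set (Q := dot N (fun i => c i - p i) (fun i => c i - p i)).
  set (A := dot N (fun i => y i - p i) (fun i => y i - p i)).
  assert (HQ : 0 <= Q) by apply dot_nonneg.
  assert (HA : 0 <= A) by apply dot_nonneg.
  assert (Ht : forall t, 0 < t <= 1 -> 2 * W <= t * Q).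
  { intros t Ht. specialize (Hmin _ (simplex_conv N p c t Hp Hc ltac:(lra))).
    unfold vnorm in Hmin. apply sqrt_le_0 in Hmin; try apply dot_nonneg.
    assert (E : dot N (fun i => y i - (p i + t * (c i - p i))) (fun i => y i - (p i + t * (c i - p i)))
       = 1 * A + (-2*t) * W + (t^2) * Q + 0 * vsum N (fun _ => 0) + 0 * vsum N (fun _ => 0) + 0 * vsum N (fun _ => 0)).
    { unfold A, W, Q, dot. apply vsum_lin6; intros; ring. }
    rewrite E in Hmin. fold A in Hmin.
    assert (0 <= t * (t * Q - 2 * W)) by nra.
    apply Rmult_le_reg_l with t; [lra|]. nra. }
  destruct (Rle_or_lt W 0) as [|Wp]; [assumption|].
  specialize (Ht (W / (Q + W))). 
  assert (0 < W / (Q + W) <= 1).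
  { split. apply Rdiv_lt_0_compat; lra. apply Rmult_le_reg_r with (Q + W); [lra|]. field_simplify; lra. }
  specialize (Ht H).
  assert (W / (Q + W) * Q <= W).
  { apply Rmult_le_reg_r with (Q + W); [lra|]. field_simplify; nra. }
  lra.
Qed.

Definition sol N1 N2 L (z1 z2 : nat -> R) :=
  simplex N1 z1 /\ simplex N2 z2 /\ forall c1 c2, simplex N1 c1 -> simplex N2 c2 ->
   0 <= dot N1 (Mv N2 L z2) (fun i => c1 i - z1 i) - dot N2 (Mtv N1 L z1) (fun j => c2 j - z2 j).

Definition Dn N1 N2 (a1 a2 b1 b2 : nat -> R) :=
  dot N1 (fun i => a1 i - b1 i) (fun i => a1 i - b1 i) + dot N2 (fun i => a2 i - b2 i) (fun i => a2 i - b2 i).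

Lemma Dn_nonneg N1 N2 a1 a2 b1 b2 : 0 <= Dn N1 N2 a1 a2 b1 b2.
Proof. unfold Dn. pose proof (dot_nonneg N1 (fun i => a1 i - b1 i)). pose proof (dot_nonneg N2 (fun i => a2 i - b2 i)). lra. Qed.

Lemma Mv_sub N2 L u v i : Mv N2 L (fun j => u j - v j) i = Mv N2 L u i - Mv N2 L v i.
Proof. unfold Mv. rewrite (vsum_lin2 N2 _ (fun j => L i j * u j) (fun j => L i j * v j) 1 (-1)) by (intros; ring). ring. Qed.
Lemma Mtv_sub N1 L u v i : Mtv N1 L (fun j => u j - v j) i = Mtv N1 L u i - Mtv N1 L v i.
Proof. unfold Mtv. rewrite (vsum_lin2 N1 _ (fun j => L j i * u j) (fun j => L j i * v j) 1 (-1)) by (intros; ring). ring. Qed.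

Lemma dot_subsym N a b : dot N (fun i => a i - b i) (fun i => a i - b i) = dot N (fun i => b i - a i) (fun i => b i - a i).
Proof. apply vsum_ext; intros; ring. Qed.

Lemma fejer N1 N2 L nL eps g (x1 x2 y1 y2 p1 p2 q1 q2 x1' x2' z1 z2 : nat -> R) :
  is_opnorm N1 N2 L nL -> 0 < eps <= 1 -> 0 <= g -> g * nL <= 1 - eps ->
  (forall i, (i < N1)%nat -> y1 i = x1 i - g * Mv N2 L x2 i) ->
  (forall j, (j < N2)%nat -> y2 j = x2 j + g * Mtv N1 L x1 j) ->
  is_proj N1 (simplex N1) y1 p1 -> is_proj N2 (simplex N2) y2 p2 ->
  (forall i, (i < N1)%nat -> q1 i = p1 i - g * Mv N2 L p2 i) ->
  (forall j, (j < N2)%nat -> q2 j = p2 j + g * Mtv N1 L p1 j) ->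
  (forall i, (i < N1)%nat -> x1' i = x1 i - y1 i + q1 i) ->
  (forall j, (j < N2)%nat -> x2' j = x2 j - y2 j + q2 j) ->
  sol N1 N2 L z1 z2 ->
  Dn N1 N2 x1' x2' z1 z2 <= Dn N1 N2 x1 x2 z1 z2 - eps * Dn N1 N2 x1 x2 p1 p2.
Proof.
  intros Hop Heps Hg Hgn Hy1 Hy2 Hp1 Hp2 Hq1 Hq2 Hx1 Hx2 [Hz1 [Hz2 Hsol]].
  pose proof (opn_nonneg _ _ _ _ Hop) as Hn.
  assert (HP1 := proj_vi _ _ _ _ Hp1 Hz1).
  assert (HP2 := proj_vi _ _ _ _ Hp2 Hz2).
  assert (HS := Hsol p1 p2 (proj1 Hp1) (proj1 Hp2)).
  assert (HV1 := opn_bound _ _ _ _ Hop (fun j => p2 j - x2 j)).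
  assert (HV2 := opnT_bound _ _ _ _ Hop (fun j => p1 j - x1 j)).
  rewrite <- dot_subsym in HV1, HV2.
  assert (HK := skew N1 N2 L (fun j => p2 j - z2 j) (fun i => p1 i - z1 i)).
  assert (E1 : dot N1 (fun i => x1' i - z1 i) (fun i => x1' i - z1 i) =
     1 * dot N1 (fun i => x1 i - z1 i) (fun i => x1 i - z1 i)
   + (-1) * dot N1 (fun i => x1 i - p1 i) (fun i => x1 i - p1 i)
   + (g^2) * dot N1 (Mv N2 L (fun j => p2 j - x2 j)) (Mv N2 L (fun j => p2 j - x2 j))
   + 2 * dot N1 (fun i => y1 i - p1 i) (fun i => z1 i - p1 i)
   + (-2*g) * dot N1 (Mv N2 L z2) (fun i => p1 i - z1 i)
   + (-2*g) * dot N1 (Mv N2 L (fun j => p2 j - z2 j)) (fun i => p1 i - z1 i)).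
  { unfold dot. apply vsum_lin6. intros i Hi. cbv beta.
    rewrite Hx1, Hq1, Hy1 by exact Hi. rewrite !Mv_sub. ring. }
  assert (E2 : dot N2 (fun i => x2' i - z2 i) (fun i => x2' i - z2 i) =
     1 * dot N2 (fun i => x2 i - z2 i) (fun i => x2 i - z2 i)
   + (-1) * dot N2 (fun i => x2 i - p2 i) (fun i => x2 i - p2 i)
   + (g^2) * dot N2 (Mtv N1 L (fun j => p1 j - x1 j)) (Mtv N1 L (fun j => p1 j - x1 j))
   + 2 * dot N2 (fun i => y2 i - p2 i) (fun i => z2 i - p2 i)
   + (2*g) * dot N2 (Mtv N1 L z1) (fun i => p2 i - z2 i)
   + (2*g) * dot N2 (fun j => p2 j - z2 j) (Mtv N1 L (fun i => p1 i - z1 i))).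
  { unfold dot. apply vsum_lin6. intros i Hi. cbv beta.
    rewrite Hx2, Hq2, Hy2 by exact Hi. rewrite !Mtv_sub. ring. }
  unfold Dn. rewrite E1, E2.
  set (U1 := dot N1 (fun i => x1 i - p1 i) (fun i => x1 i - p1 i)) in *.
  set (U2 := dot N2 (fun i => x2 i - p2 i) (fun i => x2 i - p2 i)) in *.
  assert (0 <= U1) by apply dot_nonneg. assert (0 <= U2) by apply dot_nonneg.
  assert (Hgg : (g * nL)^2 <= (1 - eps)^2) by (apply pow_incr; nra).
  assert (g^2 * (dot N1 (Mv N2 L (fun j => p2 j - x2 j)) (Mv N2 L (fun j => p2 j - x2 j))
     + dot N2 (Mtv N1 L (fun j => p1 j - x1 j)) (Mtv N1 L (fun j => p1 j - x1 j))) <= (1 - eps)^2 * (U1 + U2)).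
  { pose proof (pow2_ge_0 g). nra. }
  assert ((1 - eps)^2 * (U1 + U2) <= (1 - eps) * (U1 + U2)) by (apply Rmult_le_compat_r; nra).
  assert (0 <= g * (dot N1 (Mv N2 L z2) (fun i : nat => p1 i - z1 i) -
       dot N2 (Mtv N1 L z1) (fun j : nat => p2 j - z2 j))) by (apply Rmult_le_pos; lra).
  rewrite HK. lra.
Qed.

Lemma cv_const c : Un_cv (fun _ => c) c.
Proof. intros e He. exists O. intros. unfold Rdist. rewrite Rminus_diag, Rabs_R0. lra. Qed.

Lemma vsum_cv N (f : nat -> nat -> R) l :
  (forall i, (i < N)%nat -> Un_cv (fun n => f n i) (l i)) ->
  Un_cv (fun n => vsum N (f n)) (vsum N l).
Proof. induction N; intros H; simpl.
  - apply cv_const.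
  - apply CV_plus. apply IHN; intros; apply H; lia. apply H; lia. Qed.

Lemma dot_cv N (u v : nat -> nat -> R) a b :
  (forall i, (i < N)%nat -> Un_cv (fun n => u n i) (a i)) ->
  (forall i, (i < N)%nat -> Un_cv (fun n => v n i) (b i)) ->
  Un_cv (fun n => dot N (u n) (v n)) (dot N a b).
Proof. intros Hu Hv. unfold dot. apply (vsum_cv N (fun n i => u n i * v n i)).
  intros i Hi. apply CV_mult; auto. Qed.

Lemma Mv_cv N2 L (u : nat -> nat -> R) a :
  (forall j, (j < N2)%nat -> Un_cv (fun n => u n j) (a j)) ->
  forall i, Un_cv (fun n => Mv N2 L (u n) i) (Mv N2 L a i).
Proof. intros Hu i. unfold Mv. apply (vsum_cv N2 (fun n j => L i j * u n j)).
  intros j Hj. apply CV_mult; auto. apply cv_const. Qed.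

Lemma Mtv_cv N1 L (u : nat -> nat -> R) a :
  (forall j, (j < N1)%nat -> Un_cv (fun n => u n j) (a j)) ->
  forall i, Un_cv (fun n => Mtv N1 L (u n) i) (Mtv N1 L a i).
Proof. intros Hu i. unfold Mtv. apply (vsum_cv N1 (fun n j => L j i * u n j)).
  intros j Hj. apply CV_mult; auto. apply cv_const. Qed.

Definition incr (phi : nat -> nat) := forall n, (phi n < phi (S n))%nat.

Lemma incr_ge phi : incr phi -> forall n, (n <= phi n)%nat.
Proof. intros H n; induction n; [lia|]. specialize (H n). lia. Qed.

Lemma incr_mono phi : incr phi -> forall m n, (m <= n)%nat -> (phi m <= phi n)%nat.
Proof. intros H m n Hmn; induction Hmn; [lia|]. specialize (H m0). lia. Qed.

Lemma incr_comp phi psi : incr phi -> incr psi -> incr (fun n => phi (psi n)).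
Proof. intros H1 H2 n. pose proof (H2 n).
  pose proof (incr_mono phi H1 (S (psi n)) (psi (S n)) ltac:(lia)). specialize (H1 (psi n)). lia. Qed.

Lemma cv_sub phi u l : incr phi -> Un_cv u l -> Un_cv (fun n => u (phi n)) l.
Proof. intros Hphi Hu e He. destruct (Hu e He) as [N HN]. exists N. intros n Hn.
  apply HN. pose proof (incr_ge phi Hphi n). lia. Qed.

Lemma cv_lb u l a : Un_cv u l -> (forall n, a <= u n) -> a <= l.
Proof. intros Hu Ha. destruct (Rle_or_lt a l) as [|Hl]; [assumption|].
  destruct (Hu (a - l) ltac:(lra)) as [N HN]. specialize (HN N ltac:(lia)). specialize (Ha N).
  unfold Rdist in HN. apply Rabs_def2 in HN. lra. Qed.

Lemma cv_ub u l b : Un_cv u l -> (forall n, u n <= b) -> l <= b.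
Proof. intros Hu Hb. destruct (Rle_or_lt l b) as [|Hl]; [assumption|].
  destruct (Hu (l - b) ltac:(lra)) as [N HN]. specialize (HN N ltac:(lia)). specialize (Hb N).
  unfold Rdist in HN. apply Rabs_def2 in HN. lra. Qed.

Lemma BW01 (u : nat -> R) : (forall n, 0 <= u n <= 1) ->
  exists phi l, incr phi /\ Un_cv (fun n => u (phi n)) l.
Proof. intros Hu.
  destruct (Bolzano_Weierstrass u (fun c => 0 <= c <= 1) (compact_P3 0 1) Hu) as [l Hl].
  assert (Hpick : forall N k, exists p, (N <= p)%nat /\ Rabs (u p - l) < / INR (S k)).
  { intros N k. assert (Hpos : 0 < / INR (S k)) by (apply Rinv_0_lt_compat; apply lt_0_INR; lia).
    destruct (Hl (disc l (mkposreal _ Hpos)) N) as [p [Hp Hv]].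
    - exists (mkposreal _ Hpos). intros y Hy. exact Hy.
    - exists p. split; [exact Hp| exact Hv]. }
  pose (pick := fun N k => proj1_sig (constructive_indefinite_description _ (Hpick N k))).
  assert (Hspec : forall N k, (N <= pick N k)%nat /\ Rabs (u (pick N k) - l) < / INR (S k)).
  { intros N k. unfold pick. destruct (constructive_indefinite_description _ (Hpick N k)). simpl. exact a. }
  pose (phi := fix f (n : nat) : nat := match n with O => pick O O | S m => pick (S (f m)) (S m) end).
  exists phi, l. split.
  - intro n. simpl. destruct (Hspec (S (phi n)) (S n)). lia.
  - assert (Hb : forall n, Rabs (u (phi n) - l) < / INR (S n)).
    { intro n. destruct n; simpl; apply Hspec. }
    intros e He. destruct (archimed_cor1 e He) as [N [HN HN0]]. exists N. intros n Hn.
    unfold Rdist. apply Rlt_trans with (/ INR (S n)); [apply Hb|].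
    apply Rle_lt_trans with (/ INR N); [|exact HN].
    apply Rinv_le_contravar. apply lt_0_INR; lia. apply le_INR; lia.
Qed.

Lemma BWmulti K (w : nat -> nat -> R) : (forall n k, (k < K)%nat -> 0 <= w n k <= 1) ->
  exists phi l, incr phi /\ forall k, (k < K)%nat -> Un_cv (fun n => w (phi n) k) (l k).
Proof. induction K; intros Hw.
  - exists (fun n => n), (fun _ => 0). split. intro n; lia. intros; lia.
  - destruct IHK as [phi [l [Hphi Hl]]]. intros; apply Hw; lia.
    destruct (BW01 (fun n => w (phi n) K)) as [psi [lK [Hpsi HlK]]]. intros; apply Hw; lia.
    exists (fun n => phi (psi n)), (fun k => if Nat.eqb k K then lK else l k). split.
    + apply incr_comp; assumption.
    + intros k Hk. destruct (Nat.eqb_spec k K) as [->|Hne].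
      * exact HlK.
      * apply (cv_sub psi (fun n => w (phi n) k)); [assumption|]. apply Hl; lia.
Qed.

Lemma cv_ext u v l : (forall n, u n = v n) -> Un_cv u l -> Un_cv v l.
Proof. intros H Hu e He. destruct (Hu e He) as [N HN]. exists N. intros n Hn. rewrite <- H. auto. Qed.

Lemma sq_cv f a e : (forall n, (f n - a)^2 <= e n) -> Un_cv e 0 -> Un_cv f a.
Proof. intros Hf He eps Heps. destruct (He (eps^2) ltac:(nra)) as [N HN]. exists N. intros n Hn.
  specialize (HN n Hn). specialize (Hf n). unfold Rdist in *. rewrite Rminus_0_r in HN.
  apply Rabs_def2 in HN. destruct HN as [HN _].
  destruct (Rcase_abs (f n - a)) as [Hneg|Hpos].
  - rewrite Rabs_left by lra. destruct (Rlt_or_le (-(f n - a)) eps); [assumption|]. nra.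
  - rewrite Rabs_right by lra. destruct (Rlt_or_le (f n - a) eps); [assumption|]. nra.
Qed.

Lemma decr_le u : (forall n, u (S n) <= u n) -> forall m n, (m <= n)%nat -> u n <= u m.
Proof. intros H m n Hmn. induction Hmn; [lra|]. specialize (H m0). lra. Qed.

Lemma lim_sign (g s t : nat -> R) eps sl : 0 < eps -> (forall n, eps <= g n) ->
  (forall n, t n <= g n * s n) -> Un_cv s sl -> Un_cv t 0 -> 0 <= sl.
Proof. intros He Hg Hts Hs Ht. destruct (Rle_or_lt 0 sl) as [|Hl]; [assumption|]. exfalso.
  destruct (Hs (- sl / 2) ltac:(lra)) as [Na HNa].
  destruct (Ht (- (eps * sl) / 2) ltac:(nra)) as [Nb HNb].
  specialize (HNa (Nat.max Na Nb) ltac:(lia)). specialize (HNb (Nat.max Na Nb) ltac:(lia)).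
  set (n := Nat.max Na Nb) in *. unfold Rdist in *. rewrite Rminus_0_r in HNb.
  apply Rabs_def2 in HNa. apply Rabs_def2 in HNb. specialize (Hts n). specialize (Hg n).
  assert (s n < sl / 2) by lra.
  assert (g n * s n <= eps * s n) by nra.
  nra.
Qed.

Lemma Dn_ge1 N1 N2 a1 a2 b1 b2 i : (i < N1)%nat -> (a1 i - b1 i)^2 <= Dn N1 N2 a1 a2 b1 b2.
Proof. intros Hi. unfold Dn. pose proof (dot_nonneg N2 (fun i => a2 i - b2 i)).
  assert ((a1 i - b1 i)^2 <= dot N1 (fun i => a1 i - b1 i) (fun i => a1 i - b1 i)).
  { unfold dot. replace ((a1 i - b1 i)^2) with ((fun k => (a1 k - b1 k) * (a1 k - b1 k)) i) by (simpl; ring).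
    apply (vsum_ge_term _ (fun k => (_ k - _ k) * (_ k - _ k))); [intros k _; cbv beta; apply Rle_0_sqr | exact Hi]. }
  lra. Qed.

Lemma Dn_ge2 N1 N2 a1 a2 b1 b2 i : (i < N2)%nat -> (a2 i - b2 i)^2 <= Dn N1 N2 a1 a2 b1 b2.
Proof. intros Hi. unfold Dn. pose proof (dot_nonneg N1 (fun i => a1 i - b1 i)).
  assert ((a2 i - b2 i)^2 <= dot N2 (fun i => a2 i - b2 i) (fun i => a2 i - b2 i)).
  { unfold dot. replace ((a2 i - b2 i)^2) with ((fun k => (a2 k - b2 k) * (a2 k - b2 k)) i) by (simpl; ring).
    apply (vsum_ge_term _ (fun k => (_ k - _ k) * (_ k - _ k))); [intros k _; cbv beta; apply Rle_0_sqr | exact Hi]. }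
  lra. Qed.

Lemma dot_zero_l N b : dot N (fun _ => 0) b = 0.
Proof. unfold dot. rewrite (vsum_lin2 N _ (fun _ => 0) (fun _ => 0) 0 0) by (intros; ring). ring. Qed.

Theorem mainTheorem6
  (N1 N2 : nat) (HN1 : (1 <= N1)%nat) (HN2 : (1 <= N2)%nat)
  (L : nat -> nat -> R)
  (HL0 : exists i j, (i < N1)%nat /\ (j < N2)%nat /\ L i j <> 0)
  (nL : R) (HnL : is_opnorm N1 N2 L nL)
  (Hsol : exists z1 z2, simplex N1 z1 /\ simplex N2 z2 /\
     in_normal_cone N1 (simplex N1) z1 (fun i => - Mv N2 L z2 i) /\
     in_normal_cone N2 (simplex N2) z2 (Mtv N1 L z1))
  (eps : R) (Heps : 0 < eps < 1 / (nL + 1))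
  (gamma : nat -> R) (Hgamma : forall n, eps <= gamma n <= (1 - eps) / nL)
  (x1 y1 p1 q1 : nat -> nat -> R) (x2 y2 p2 q2 : nat -> nat -> R)
  (Hy1 : forall n i, (i < N1)%nat -> y1 n i = x1 n i - gamma n * Mv N2 L (x2 n) i)
  (Hy2 : forall n j, (j < N2)%nat -> y2 n j = x2 n j + gamma n * Mtv N1 L (x1 n) j)
  (Hp1 : forall n, is_proj N1 (simplex N1) (y1 n) (p1 n))
  (Hp2 : forall n, is_proj N2 (simplex N2) (y2 n) (p2 n))
  (Hq1 : forall n i, (i < N1)%nat -> q1 n i = p1 n i - gamma n * Mv N2 L (p2 n) i)
  (Hq2 : forall n j, (j < N2)%nat -> q2 n j = p2 n j + gamma n * Mtv N1 L (p1 n) j)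
  (Hx1 : forall n i, (i < N1)%nat -> x1 (S n) i = x1 n i - y1 n i + q1 n i)
  (Hx2 : forall n j, (j < N2)%nat -> x2 (S n) j = x2 n j - y2 n j + q2 n j) :
  exists xb1 xb2 : nat -> R,
    (forall i, (i < N1)%nat -> Un_cv (fun n => x1 n i) (xb1 i)) /\
    (forall j, (j < N2)%nat -> Un_cv (fun n => x2 n j) (xb2 j)) /\
    (* xb1 in Argmin_{x in C1} x^T L xb2 *)
    simplex N1 xb1 /\
    (forall x, simplex N1 x -> dot N1 xb1 (Mv N2 L xb2) <= dot N1 x (Mv N2 L xb2)) /\
    (* xb2 in Argmax_{x in C2} xb1^T L x *)
    simplex N2 xb2 /\
    (forall x, simplex N2 x -> dot N1 xb1 (Mv N2 L x) <= dot N1 xb1 (Mv N2 L xb2)).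
Proof.
  pose proof (opn_nonneg _ _ _ _ HnL) as Hn.
  assert (Heps1 : eps < 1).
  { assert (1 / (nL + 1) <= 1). { unfold Rdiv. rewrite Rmult_1_l. rewrite <- Rinv_1. apply Rinv_le_contravar; lra. } lra. }
  assert (Hgn : forall n, gamma n * nL <= 1 - eps).
  { intro n. destruct (Rle_lt_or_eq_dec 0 nL Hn) as [Hp|H0].
    - destruct (Hgamma n) as [_ Hg]. apply Rmult_le_reg_r with (/ nL). apply Rinv_0_lt_compat; lra.
      rewrite Rmult_assoc, Rinv_r by lra. rewrite Rmult_1_r. exact Hg.
    - rewrite <- H0. lra. }
  assert (Hg0 : forall n, 0 <= gamma n) by (intro n; destruct (Hgamma n); lra).
  assert (FEJ : forall z1 z2, sol N1 N2 L z1 z2 -> forall n,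
     Dn N1 N2 (x1 (S n)) (x2 (S n)) z1 z2 <= Dn N1 N2 (x1 n) (x2 n) z1 z2 - eps * Dn N1 N2 (x1 n) (x2 n) (p1 n) (p2 n)).
  { intros z1 z2 Hz n. apply (fejer N1 N2 L nL eps (gamma n) (x1 n) (x2 n) (y1 n) (y2 n) (p1 n) (p2 n) (q1 n) (q2 n)); auto; lra. }
  destruct Hsol as [z1 [z2 [Hz1 [Hz2 [[_ Hnc1] [_ Hnc2]]]]]].
  assert (Hz : sol N1 N2 L z1 z2).
  { split; [exact Hz1|]. split; [exact Hz2|]. intros c1 c2 Hc1 Hc2.
    specialize (Hnc1 c1 Hc1). specialize (Hnc2 c2 Hc2).
    assert (dot N1 (Mv N2 L z2) (fun i => c1 i - z1 i) = (-1) * dot N1 (fun i => c1 i - z1 i) (fun i => - Mv N2 L z2 i) + 0 * vsum N1 (fun _ => 0)).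
    { unfold dot. apply vsum_lin2. intros; ring. }
    assert (dot N2 (Mtv N1 L z1) (fun j => c2 j - z2 j) = 1 * dot N2 (fun j => c2 j - z2 j) (Mtv N1 L z1) + 0 * vsum N2 (fun _ => 0)).
    { unfold dot. apply vsum_lin2. intros; ring. }
    lra. }
  set (e := fun n => Dn N1 N2 (x1 n) (x2 n) (p1 n) (p2 n)).
  assert (He : Un_cv e 0).
  { set (d := fun n => Dn N1 N2 (x1 n) (x2 n) z1 z2).
    assert (Hdec : Un_decreasing d).
    { intro n. unfold d. pose proof (FEJ z1 z2 Hz n). pose proof (Dn_nonneg N1 N2 (x1 n) (x2 n) (p1 n) (p2 n)). nra. }
    assert (Hlb : has_lb d).
    { exists 0. intros x [i ->]. unfold opp_seq, d. pose proof (Dn_nonneg N1 N2 (x1 i) (x2 i) z1 z2). lra. }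
    destruct (decreasing_cv d Hdec Hlb) as [l Hl].
    intros r Hr. destruct (Hl (eps * r / 2) ltac:(nra)) as [N HN]. exists N. intros n Hn'.
    pose proof (HN n Hn') as A1. pose proof (HN (S n) ltac:(lia)) as A2. unfold Rdist in *.
    apply Rabs_def2 in A1. apply Rabs_def2 in A2.
    pose proof (FEJ z1 z2 Hz n). fold (d n) (d (S n)) in H. fold (e n) in H.
    assert (0 <= e n) by apply Dn_nonneg.
    rewrite Rminus_0_r, Rabs_right by lra.
    assert (eps * e n < eps * r) by lra.
    apply Rmult_lt_reg_l with eps; lra. }
  assert (Hd1 : forall i, (i < N1)%nat -> Un_cv (fun n => x1 n i - p1 n i) 0).
  { intros i Hi. apply (sq_cv _ 0 e); [|exact He]. intro n. rewrite Rminus_0_r. apply Dn_ge1; exact Hi. }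
  assert (Hd2 : forall i, (i < N2)%nat -> Un_cv (fun n => x2 n i - p2 n i) 0).
  { intros i Hi. apply (sq_cv _ 0 e); [|exact He]. intro n. rewrite Rminus_0_r. apply Dn_ge2; exact Hi. }
  destruct (BWmulti N1 (fun n k => p1 n k)) as [phi [a1 [Hphi Ha1]]].
  { intros n k Hk. apply (proj1 (proj1 (Hp1 n))). exact Hk. }
  destruct (BWmulti N2 (fun n k => p2 (phi n) k)) as [psi [a2 [Hpsi Ha2]]].
  { intros n k Hk. apply (proj1 (proj1 (Hp2 (phi n)))). exact Hk. }
  set (sg := fun n => phi (psi n)).
  assert (Hsg : incr sg) by exact (incr_comp phi psi Hphi Hpsi).
  assert (P1cv : forall i, (i < N1)%nat -> Un_cv (fun n => p1 (sg n) i) (a1 i)).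
  { intros i Hi. apply (cv_sub psi (fun n => p1 (phi n) i)); [assumption|]. apply Ha1; exact Hi. }
  assert (P2cv : forall i, (i < N2)%nat -> Un_cv (fun n => p2 (sg n) i) (a2 i)) by exact Ha2.
  assert (X1cv : forall i, (i < N1)%nat -> Un_cv (fun n => x1 (sg n) i) (a1 i)).
  { intros i Hi. replace (a1 i) with (0 + a1 i) by ring.
    apply (cv_ext (fun n => (x1 (sg n) i - p1 (sg n) i) + p1 (sg n) i)); [intros; ring|].
    apply CV_plus; [|apply P1cv; exact Hi]. apply (cv_sub sg (fun n => x1 n i - p1 n i)); auto. }
  assert (X2cv : forall i, (i < N2)%nat -> Un_cv (fun n => x2 (sg n) i) (a2 i)).
  { intros i Hi. replace (a2 i) with (0 + a2 i) by ring.
    apply (cv_ext (fun n => (x2 (sg n) i - p2 (sg n) i) + p2 (sg n) i)); [intros; ring|].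
    apply CV_plus; [|apply P2cv; exact Hi]. apply (cv_sub sg (fun n => x2 n i - p2 n i)); auto. }
  assert (Hs1 : simplex N1 a1).
  { split.
    - intros i Hi. split.
      + apply (cv_lb _ _ _ (P1cv i Hi)). intro n. apply (proj1 (proj1 (Hp1 (sg n))) i Hi).
      + apply (cv_ub _ _ _ (P1cv i Hi)). intro n. apply (proj1 (proj1 (Hp1 (sg n))) i Hi).
    - pose proof (vsum_cv N1 (fun n => p1 (sg n)) a1 P1cv) as Hv.
      apply (UL_sequence (fun n => vsum N1 (p1 (sg n)))); [exact Hv|].
      apply (cv_ext (fun _ => 1)); [intro n; symmetry; apply (proj2 (proj1 (Hp1 (sg n))))|]. apply cv_const. }
  assert (Hs2 : simplex N2 a2).
  { split.
    - intros i Hi. split.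
      + apply (cv_lb _ _ _ (P2cv i Hi)). intro n. apply (proj1 (proj1 (Hp2 (sg n))) i Hi).
      + apply (cv_ub _ _ _ (P2cv i Hi)). intro n. apply (proj1 (proj1 (Hp2 (sg n))) i Hi).
    - pose proof (vsum_cv N2 (fun n => p2 (sg n)) a2 P2cv) as Hv.
      apply (UL_sequence (fun n => vsum N2 (p2 (sg n)))); [exact Hv|].
      apply (cv_ext (fun _ => 1)); [intro n; symmetry; apply (proj2 (proj1 (Hp2 (sg n))))|]. apply cv_const. }
  assert (Ha : sol N1 N2 L a1 a2).
  { split; [exact Hs1|]. split; [exact Hs2|]. intros c1 c2 Hc1 Hc2.
    set (s := fun n => dot N1 (Mv N2 L (x2 (sg n))) (fun i => c1 i - p1 (sg n) i)
                     - dot N2 (Mtv N1 L (x1 (sg n))) (fun j => c2 j - p2 (sg n) j)).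
    set (t := fun n => dot N1 (fun i => x1 (sg n) i - p1 (sg n) i) (fun i => c1 i - p1 (sg n) i)
                     + dot N2 (fun j => x2 (sg n) j - p2 (sg n) j) (fun j => c2 j - p2 (sg n) j)).
    apply (lim_sign (fun n => gamma (sg n)) s t eps); [lra| intro n; apply Hgamma | | |].
    - intro n. unfold s, t.
      pose proof (proj_vi _ _ _ _ (Hp1 (sg n)) Hc1) as V1.
      pose proof (proj_vi _ _ _ _ (Hp2 (sg n)) Hc2) as V2.
      assert (E1 : dot N1 (fun i => y1 (sg n) i - p1 (sg n) i) (fun i => c1 i - p1 (sg n) i)
        = 1 * dot N1 (fun i => x1 (sg n) i - p1 (sg n) i) (fun i => c1 i - p1 (sg n) i)
          + (- gamma (sg n)) * dot N1 (Mv N2 L (x2 (sg n))) (fun i => c1 i - p1 (sg n) i)).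
      { unfold dot. apply vsum_lin2. intros i Hi. rewrite Hy1 by exact Hi. ring. }
      assert (E2 : dot N2 (fun i => y2 (sg n) i - p2 (sg n) i) (fun i => c2 i - p2 (sg n) i)
        = 1 * dot N2 (fun i => x2 (sg n) i - p2 (sg n) i) (fun i => c2 i - p2 (sg n) i)
          + (gamma (sg n)) * dot N2 (Mtv N1 L (x1 (sg n))) (fun i => c2 i - p2 (sg n) i)).
      { unfold dot. apply vsum_lin2. intros i Hi. rewrite Hy2 by exact Hi. ring. }
      lra.
    - unfold s. apply CV_minus.
      + apply (dot_cv N1 (fun n => Mv N2 L (x2 (sg n))) (fun n i => c1 i - p1 (sg n) i)).
        * intros i Hi. apply (Mv_cv N2 L (fun n => x2 (sg n))). exact X2cv.
        * intros i Hi. apply CV_minus; [apply cv_const| apply P1cv; exact Hi].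
      + apply (dot_cv N2 (fun n => Mtv N1 L (x1 (sg n))) (fun n i => c2 i - p2 (sg n) i)).
        * intros i Hi. apply (Mtv_cv N1 L (fun n => x1 (sg n))). exact X1cv.
        * intros i Hi. apply CV_minus; [apply cv_const| apply P2cv; exact Hi].
    - unfold t. replace 0 with (dot N1 (fun _ => 0) (fun i => c1 i - a1 i) + dot N2 (fun _ => 0) (fun i => c2 i - a2 i))
        by (rewrite !dot_zero_l; ring).
      apply CV_plus.
      + apply (dot_cv N1 (fun n i => x1 (sg n) i - p1 (sg n) i) (fun n i => c1 i - p1 (sg n) i)).
        * intros i Hi. apply (cv_sub sg (fun n => x1 n i - p1 n i)); auto.
        * intros i Hi. apply CV_minus; [apply cv_const| apply P1cv; exact Hi].
      + apply (dot_cv N2 (fun n i => x2 (sg n) i - p2 (sg n) i) (fun n i => c2 i - p2 (sg n) i)).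
        * intros i Hi. apply (cv_sub sg (fun n => x2 n i - p2 n i)); auto.
        * intros i Hi. apply CV_minus; [apply cv_const| apply P2cv; exact Hi]. }
  set (d := fun n => Dn N1 N2 (x1 n) (x2 n) a1 a2).
  assert (Hdec : forall n, d (S n) <= d n).
  { intro n. unfold d. pose proof (FEJ a1 a2 Ha n). pose proof (Dn_nonneg N1 N2 (x1 n) (x2 n) (p1 n) (p2 n)). nra. }
  assert (Hdsub : Un_cv (fun n => d (sg n)) 0).
  { unfold d, Dn. replace 0 with (dot N1 (fun _ => 0) (fun _ => 0) + dot N2 (fun _ => 0) (fun _ => 0))
        by (rewrite !dot_zero_l; ring).
    apply CV_plus.
    - apply (dot_cv N1 (fun n i => x1 (sg n) i - a1 i) (fun n i => x1 (sg n) i - a1 i));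
        intros i Hi; replace 0 with (a1 i - a1 i) by ring; apply CV_minus; [apply X1cv; exact Hi|apply cv_const|apply X1cv; exact Hi|apply cv_const].
    - apply (dot_cv N2 (fun n i => x2 (sg n) i - a2 i) (fun n i => x2 (sg n) i - a2 i));
        intros i Hi; replace 0 with (a2 i - a2 i) by ring; apply CV_minus; [apply X2cv; exact Hi|apply cv_const|apply X2cv; exact Hi|apply cv_const]. }
  assert (Hd : Un_cv d 0).
  { intros r Hr. destruct (Hdsub r Hr) as [K HK]. exists (sg K). intros n Hn'.
    specialize (HK K ltac:(lia)). unfold Rdist in *. rewrite Rminus_0_r in *.
    pose proof (decr_le d Hdec (sg K) n Hn').
    assert (0 <= d n) by apply Dn_nonneg. assert (0 <= d (sg K)) by apply Dn_nonneg.
    rewrite Rabs_right in * by lra. lra. }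
  exists a1, a2. split; [|split; [|split; [exact Hs1|split; [|split; [exact Hs2|]]]]].
  - intros i Hi. apply (sq_cv _ _ d); [|exact Hd]. intro n. apply Dn_ge1; exact Hi.
  - intros i Hi. apply (sq_cv _ _ d); [|exact Hd]. intro n. apply Dn_ge2; exact Hi.
  - intros x Hx. destruct Ha as [_ [_ Hsa]]. specialize (Hsa x a2 Hx Hs2).
    assert (dot N2 (Mtv N1 L a1) (fun j => a2 j - a2 j) = 0 * vsum N2 (fun _ => 0) + 0 * vsum N2 (fun _ => 0))
      by (unfold dot; apply vsum_lin2; intros; ring).
    assert (dot N1 (Mv N2 L a2) (fun i => x i - a1 i) = 1 * dot N1 x (Mv N2 L a2) + (-1) * dot N1 a1 (Mv N2 L a2))
      by (unfold dot; apply vsum_lin2; intros; ring).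
    lra.
  - intros x Hx. destruct Ha as [_ [_ Hsa]]. specialize (Hsa a1 x Hs1 Hx).
    assert (dot N1 (Mv N2 L a2) (fun i => a1 i - a1 i) = 0 * vsum N1 (fun _ => 0) + 0 * vsum N1 (fun _ => 0))
      by (unfold dot; apply vsum_lin2; intros; ring).
    assert (dot N2 (Mtv N1 L a1) (fun j => x j - a2 j) = 1 * dot N2 (Mtv N1 L a1) x + (-1) * dot N2 (Mtv N1 L a1) a2)
      by (unfold dot; apply vsum_lin2; intros; ring).
    assert (HSK : forall v, dot N1 a1 (Mv N2 L v) = dot N2 (Mtv N1 L a1) v).
    { intro v. rewrite dot_comm, skew, dot_comm. reflexivity. }
    rewrite !HSK. lra.
Qed.
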